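(* Let $k\ge 2$ and let $W\in\mathcal W^2_{3\times(3k+1)}$ be such that each of its three rows contains exactly $2k+1$ filled cells (equivalently $e(W[1])=e(W[2])=e(W[3])=1/3$). Then the multiset of lengths of the maximal horizontal pillars of the middle row $W[2]$ is either $\{2,2,\dots,2,1\}$ ($k$ parts equal to $2$ and one part equal to $1$) or $\{3,2,\dots,2,1,1\}$ (one part $3$, $k-2$ parts $2$, and two parts $1$).
   Context: A 2-dimensional binary word of dimensions $h\times w$ is an $h\times w$ matrix with entries in $\{\square,\blacksquare\}$ (filled cells $\blacksquare$, empty cells $\square$); $|U|_\blacksquare$ is the number of filled cells of $U$. Two cells $(i,j),(i',j')$ are adjacent if $|i-i'|+|j-j'|=1$; the degree of a filled cell is the number of filled cells adjacent to it. $\mathcal W^2_{h\times w}$ is the set of $h\times w$ binary words in which every filled cell has degree at most $2$. $W[i]$ denotes row $i$ of $W$. The excess of an $a\times b$ word $U$ is $e(U)=|U|_\blacksquare-2ab/3$. A maximal horizontal pillar of a row is a maximal run of consecutive filled cells in that row. *)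

(* Defs.v *)
From mathcomp Require Import all_boot.
Set Implicit Arguments. Unset Strict Implicit. Unset Printing Implicit Defensive.

(* A 2-dimensional binary word of dimensions h x w: a finite function row -> column -> bool,
   true = filled cell, false = empty cell. Rows/columns indexed from 0. *)
Definition bword (h w : nat) := {ffun 'I_h -> {ffun 'I_w -> bool}}.

Definition cell (h w : nat) (W : bword h w) (i j : nat) : bool :=
  match @insub nat (fun x => x < h) 'I_h i, @insub nat (fun x => x < w) 'I_w j with
  | Some i', Some j' => W i' j'
  | _, _ => false
  end.

Definition degree (h w : nat) (W : bword h w) (i j : nat) : nat :=
  cell W i j.+1 + ((0 < j) && cell W i j.-1)
  + cell W i.+1 j + ((0 < i) && cell W i.-1 j).

Definition in_W2 (h w : nat) (W : bword h w) : Prop :=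
  forall i j, cell W i j -> degree W i j <= 2.

Definition row_filled (h w : nat) (W : bword h w) (i : 'I_h) : nat :=
  #|[pred j : 'I_w | W i j]|.

Definition max_pillar (h w : nat) (W : bword h w) (i a b : nat) : bool :=
  [&& a <= b, b < w,
      [forall j : 'I_w, (a <= j <= b) ==> cell W i j],
      (a == 0) || ~~ cell W i a.-1
    & ~~ cell W i b.+1].

Definition pillar_lengths (h w : nat) (W : bword h w) (i : nat) : seq nat :=
  [seq (nat_of_ord p.2 - nat_of_ord p.1).+1
     | p <- enum [pred p : 'I_w * 'I_w | max_pillar W i p.1 p.2]].

(* Main.v *)
Require Import Defs.
From mathcomp Require Import all_boot.
From mathcomp Require Import zify.
Set Implicit Arguments. Unset Strict Implicit. Unset Printing Implicit Defensive.

Lemma sum_lb (r : seq nat) : 0 \notin r -> 2 \notin r ->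
  3 * size r <= sumn r + 2 * count (pred1 1) r.
Proof.
elim: r => //= x r IH; rewrite !inE !negb_or => /andP[x0 r0] /andP[x2 r2].
have := IH r0 r2. move: x0 x2; rewrite /= -!(eq_sym x).
case: eqP => [->|Hx1] //= x0 x2; try lia.
Qed.

Lemma small_list (r : seq nat) : 0 \notin r -> 2 \notin r ->
  count (pred1 1) r <= 2 -> sumn r + 1 = 2 * size r ->
  perm_eq r [:: 1] \/ perm_eq r [:: 3; 1; 1].
Proof.
move=> h0 h2 hc hs; have := sum_lb h0 h2.
move: h0 h2 hc hs; case: r => [|x [|y [|z [|t r]]]] //=; rewrite ?addn0.
- move=> _ _ _ hs _; have -> : x = 1 by lia. by left.
- rewrite !inE !negb_or => /andP[/eqP ? /eqP ?] /andP[/eqP ? /eqP ?] _ hs _.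
  lia.
- rewrite !inE !negb_or => /and3P[/eqP ? /eqP ? /eqP ?] /and3P[/eqP ? /eqP ? /eqP ?] hc hs _.
  have hx : x = 1 \/ x = 3 by lia.
  have hy : y = 1 \/ y = 3 by lia.
  have hz : z = 1 \/ z = 3 by lia.
  case: hx => ?; case: hy => ?; case: hz => ?; subst; try (by right); lia.
- move=> _ _ hc hs hl; lia.
Qed.

Lemma final (k : nat) (s : seq nat) : 2 <= k -> 0 \notin s ->
  size s = k.+1 -> sumn s = 2 * k + 1 -> count (pred1 1) s <= 2 ->
  perm_eq s (rcons (nseq k 2) 1)
  \/ perm_eq s (3 :: nseq (k - 2) 2 ++ [:: 1; 1]).
Proof.
move=> hk h0 hsz hsum hc.
set s2 := filter (pred1 2) s; set r := filter (predC (pred1 2)) s.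
have hp : perm_eq s (s2 ++ r) by rewrite perm_sym perm_filterC.
have e2 : s2 = nseq (size s2) 2 by apply/all_pred1P; rewrite filter_all.
have hsz' : size s2 + size r = k.+1 by rewrite -size_cat -(perm_size hp) hsz.
have hsum' : 2 * size s2 + sumn r = 2 * k + 1.
  have e : sumn s2 = 2 * size s2 by rewrite {1}e2 sumn_nseq mulnC.
  have := perm_sumn hp; rewrite sumn_cat; lia.
have r0 : 0 \notin r by rewrite mem_filter negb_and h0 orbT.
have r2 : 2 \notin r.
  by rewrite mem_filter; apply/negP => /andP[].
have rc : count (pred1 1) r <= 2.
  apply: leq_trans hc; rewrite count_filter; apply: sub_count => x /andP[].
  by [].
have rs : sumn r + 1 = 2 * size r by lia.
case: (small_list r0 r2 rc rs) => hr.
- left; have sr : size r = 1 by rewrite (perm_size hr).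
  apply: (perm_trans hp); rewrite e2 -cats1.
  have -> : size s2 = k by lia.
  by rewrite perm_cat2l.
- right; have sr : size r = 3 by rewrite (perm_size hr).
  apply: (perm_trans hp); rewrite e2.
  have -> : size s2 = k - 2 by lia.
  apply: (perm_trans (perm_cat (perm_refl _) hr)).
  rewrite perm_sym; apply/permPl; exact: (perm_catCA [:: 3] (nseq (k - 2) 2) [:: 1; 1]).
Qed.

Lemma cell_lt h w (W : bword h w) i j : cell W i j -> j < w.
Proof.
rewrite /cell; case: insubP => [i' _ _|_] //; case: insubP => [j' -> _|_] //.
Qed.

Lemma cellE h w (W : bword h w) (i : 'I_h) (j : 'I_w) : cell W i j = W i j.
Proof.
rewrite /cell; case: insubP => [i' _ /val_inj ->|]; last by rewrite ltn_ord.
by case: insubP => [j' _ /val_inj ->|]; last by rewrite ltn_ord.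
Qed.

Lemma mpP h w (W : bword h w) i a b :
  max_pillar W i a b <->
  [/\ a <= b, b < w, (forall j, a <= j <= b -> cell W i j),
      (a == 0) || ~~ cell W i a.-1 & ~~ cell W i b.+1].
Proof.
rewrite /max_pillar; split.
- case/and5P => h1 h2 /forallP h3 h4 h5; split => // j /andP[j1 j2].
  have jw : j < w by apply: leq_ltn_trans h2.
  by have := h3 (Ordinal jw); rewrite /= j1 j2.
- case=> h1 h2 h3 h4 h5; apply/and5P; split => //.
  by apply/forallP => j; apply/implyP; apply: h3.
Qed.

Lemma mp_uniq h w (W : bword h w) i a b a' b' j :
  max_pillar W i a b -> max_pillar W i a' b' ->
  a <= j <= b -> a' <= j <= b' -> a = a' /\ b = b'.
Proof.
move=> /mpP[h1 h2 h3 h4 h5] /mpP[h1' h2' h3' h4' h5'] /andP[j1 j2] /andP[j1' j2'].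
split.
- case: (ltngtP a a') => // H.
  + have : cell W i a'.-1 by apply: h3; apply/andP; split; lia.
    by move: h4'; case: eqP => [E|_ /negbTE ->]; first lia.
  + have : cell W i a.-1 by apply: h3'; apply/andP; split; lia.
    by move: h4; case: eqP => [E|_ /negbTE ->]; first lia.
- case: (ltngtP b b') => // H.
  + have : cell W i b.+1 by apply: h3'; apply/andP; split; lia.
    by rewrite (negbTE h5).
  + have : cell W i b'.+1 by apply: h3; apply/andP; split; lia.
    by rewrite (negbTE h5').
Qed.

Lemma left_end h w (W : bword h w) i j : cell W i j ->
  exists a, [/\ a <= j, (forall y, a <= y <= j -> cell W i y) &
             (a == 0) || ~~ cell W i a.-1].
Proof.
elim: j => [|j IH] hj.
- exists 0; split => // y /andP[y1 y2]; have -> : y = 0 by lia. by [].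
- case hc: (cell W i j).
  + have [a [a1 a2 a3]] := IH hc; exists a; split => //; first lia.
    move=> y /andP[y1 y2]; case: (ltngtP y j.+1) => H; last by rewrite H.
    * by apply: a2; apply/andP; split; lia.
    * lia.
  + exists j.+1; split => //=; last by rewrite hc.
    move=> y /andP[y1 y2]; have -> : y = j.+1 by lia. by [].
Qed.

Lemma right_end h w (W : bword h w) i : forall n j, w - j = n -> cell W i j ->
  exists b, [/\ j <= b, (forall y, j <= y <= b -> cell W i y) & ~~ cell W i b.+1].
Proof.
elim=> [|n IH] j hn hj.
- have := cell_lt hj; lia.
- case hc: (cell W i j.+1).
  + have [b [b1 b2 b3]] := IH j.+1 ltac:(lia) hc; exists b; split => //; first lia.
    move=> y /andP[y1 y2]; case: (ltngtP y j) => H; first lia.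
    * by apply: b2; apply/andP; split; lia.
    * by rewrite H.
  + exists j; split => //; last by rewrite hc.
    move=> y /andP[y1 y2]; have -> : y = j by lia. by [].
Qed.

Lemma mp_exists h w (W : bword h w) i j : cell W i j ->
  exists a b, max_pillar W i a b /\ a <= j <= b.
Proof.
move=> hj; have [a [a1 a2 a3]] := left_end hj.
have [b [b1 b2 b3]] := right_end (erefl _) hj.
exists a, b; split; last by rewrite a1 b1.
have bw : b < w by apply: (@cell_lt _ _ W i); apply: b2; rewrite b1 leqnn.
apply/mpP; split => //; first lia.
move=> y /andP[y1 y2]; case: (leqP y j) => H.
- by apply: a2; rewrite y1 H.
- by apply: b2; rewrite y2 ltnW.
Qed.

Lemma part h w (W : bword h w) i (F : 'I_w -> nat) :
  \sum_(j : 'I_w | cell W i j) F j =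
  \sum_(p : 'I_w * 'I_w | max_pillar W i p.1 p.2)
     \sum_(j : 'I_w | p.1 <= j <= p.2) F j.
Proof.
rewrite [RHS](eq_bigr (fun p : 'I_w * 'I_w => \sum_(j < w) (if p.1 <= j <= p.2 then F j else 0))); last by move=> p _; rewrite big_mkcond.
rewrite exchange_big /= [LHS]big_mkcond; apply: eq_bigr => j _.
rewrite -big_mkcondr.
case hj: (cell W i j).
- have [a [b [hab /andP[j1 j2]]]] := mp_exists hj.
  have [_ bw _ _ _] := (mpP _ _ _ _).1 hab.
  have aw : a < w by lia.
  rewrite (big_pred1 (Ordinal aw, Ordinal bw)) // => p /=.
  apply/andP/eqP.
  + case=> hp /andP[k1 k2].
    have [E1 E2] := mp_uniq hp hab (introT andP (conj k1 k2)) (introT andP (conj j1 j2)).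
    by case: p E1 E2 hp {k1 k2} => p1 p2 /= E1 E2 _; congr pair; apply: val_inj.
  + by move=> -> /=; rewrite hab j1 j2.
- rewrite big_pred0 // => p; apply/negbTE/negP => /andP[hp hr].
  have [_ _ h3 _ _] := (mpP _ _ _ _).1 hp.
  by rewrite h3 in hj.
Qed.

Lemma sum_eq_ord n a : \sum_(j < n) ((j : nat) == a : nat) = (a < n).
Proof.
elim: n => [|n IH]; first by rewrite big_ord0.
rewrite big_ord_recr /= IH; case: (ltngtP a n) => H; rewrite ?H ?eqxx; try lia.
Qed.

Lemma sum_int n a b : \sum_(j < n | a <= j <= b) 1 = minn n b.+1 - a.
Proof.
rewrite big_mkcond; elim: n => [|n IH]; first by rewrite big_ord0.
rewrite big_ord_recr /= IH; case: (leqP a n) => H1; case: (leqP n b) => H2 /=; lia.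
Qed.

Lemma sumb (T : finType) (P Q : pred T) :
  \sum_(j | P j) (Q j : nat) = #|[pred j | P j && Q j]|.
Proof.
rewrite -sum1_card big_mkcondr /=; apply: eq_bigr => j _; by case: (Q j).
Qed.

Lemma count_enum (T : finType) (A : pred T) (a : pred T) :
  count a (enum A) = #|[pred x | A x && a x]|.
Proof. by rewrite -sum1_count big_enum_cond -sum1_card. Qed.

Lemma sum_le_all (T : finType) (P : pred T) (F : T -> nat) :
  \sum_(j | P j) F j <= \sum_j F j.
Proof.
rewrite [X in _ <= X](bigID P) /=; exact: leq_addr.
Qed.

Lemma vbound w (W : bword 3 w) a b : in_W2 W -> max_pillar W 1 a b ->
  \sum_(j < w | a <= j <= b) (cell W 0 j + cell W 2 j) <= 2.
Proof.
move=> hW hp; have [h1 h2 h3 h4 h5] := (mpP _ _ _ _).1 hp.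
apply: (@leq_trans (\sum_(j < w | a <= j <= b) (((j : nat) == a) + ((j : nat) == b)))).
  apply: leq_sum => j hj; have c1 := h3 _ hj.
  have := hW 1 j c1; rewrite /degree /=.
  move/andP: hj => [j1 j2].
  case: (ltngtP a j) => Ha; case: (ltngtP j b) => Hb; try lia.
  - have -> : cell W 1 j.+1 by apply: h3; apply/andP; split; lia.
    have -> : cell W 1 j.-1 by apply: h3; apply/andP; split; lia.
    have -> : 0 < j by lia.
    case: (cell W 0 j); case: (cell W 2 j) => //=; lia.
  - have -> : cell W 1 j.-1 by apply: h3; apply/andP; split; lia.
    have -> : 0 < j by lia.
    case: (cell W 0 j); case: (cell W 2 j); case: (cell W 1 j.+1) => //=; lia.
  - have -> : cell W 1 j.+1 by apply: h3; apply/andP; split; lia.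
    case: (cell W 0 j); case: (cell W 2 j); case: (_ && _) => //=; lia.
rewrite big_split /=.
have := sum_le_all (fun j : 'I_w => a <= j <= b) (fun j : 'I_w => ((j : nat) == a : nat)).
have := sum_le_all (fun j : 'I_w => a <= j <= b) (fun j : 'I_w => ((j : nat) == b : nat)).
rewrite !sum_eq_ord; case: (a < w); case: (b < w) => /=; lia.
Qed.

Lemma sum_le_const (T : finType) (Q : pred T) (F : T -> nat) c :
  (forall x, Q x -> F x <= c) -> \sum_(x | Q x) F x <= #|Q| * c.
Proof. move=> H; rewrite -sum_nat_const; exact: leq_sum. Qed.
Unset Implicit Arguments. Set Strict Implicit. Set Printing Implicit Defensive.

Theorem mainTheorem12 (k : nat) (W : bword 3 (3 * k + 1)) :
  2 <= k ->
  in_W2 W ->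
  (forall i : 'I_3, row_filled W i = 2 * k + 1) ->
  perm_eq (pillar_lengths W 1) (rcons (nseq k 2) 1)
  \/ perm_eq (pillar_lengths W 1) (3 :: nseq (k - 2) 2 ++ [:: 1; 1]).
Proof.
move=> hk hW hrow.
set w := 3 * k + 1. have ew : w = 3 * k + 1 by [].
pose cs i := [set j : 'I_w | cell W i j].
have hc : forall i, i < 3 -> #|cs i| = 2 * k + 1.
  move=> i hi; rewrite -(hrow (Ordinal hi)) /row_filled /cs cardsE.
  by apply: eq_card => j; rewrite inE -(cellE W (Ordinal hi) j).
have hI : forall i, i < 3 -> k.+1 <= #|cs i :&: cs 1|.
  move=> i hi; have := cardsUI (cs i) (cs 1); rewrite !hc //.
  have := max_card (cs i :|: cs 1); rewrite card_ord; lia.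
pose P := [pred p : 'I_w * 'I_w | max_pillar W 1 p.1 p.2].
pose v := fun j : 'I_w => (cell W 0 j : nat) + cell W 2 j.
pose g := fun p : 'I_w * 'I_w => \sum_(j < w | p.1 <= j <= p.2) v j.
pose S := \sum_(j : 'I_w | cell W 1 j) v j.
have hS1 : S = #|cs 0 :&: cs 1| + #|cs 2 :&: cs 1|.
  rewrite /S /v big_split /= !sumb; congr (_ + _); apply: eq_card => j;
  by rewrite !inE andbC.
have hS2 : S = \sum_(p in P) g p by rewrite /S part.
have hS3 : S <= 2 * #|P|.
  rewrite hS2 mulnC -sum_nat_const; apply: leq_sum => p hp; exact: vbound.
have pairE : forall p q : 'I_w * 'I_w, (p.1 : nat) = q.1 -> (p.2 : nat) = q.2 -> p = q.
  by move=> [p1 p2] [q1 q2] /= e1 e2; congr pair; apply: val_inj.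
have hsumc : \sum_(j < w) (cell W 1 j : nat) = 2 * k + 1.
  rewrite -(hc 1) // (@sumb _ predT (fun j : 'I_w => cell W 1 j)) /cs cardsE.
  by apply: eq_card.
have hsum2 : \sum_(j < w) (~~ cell W 1 j : nat) + \sum_(j < w) (cell W 1 j : nat) = w.
  rewrite -big_split /= -[RHS]card_ord -sum1_card; apply: eq_bigr => j _.
  by case: (cell W 1 j).
pose E := [pred j : 'I_w.+1 | ~~ cell W 1 j].
have hE : #|E| = k.+1.
  have := @sumb _ predT (fun j : 'I_w.+1 => ~~ cell W 1 j).
  rewrite big_ord_recr /=.
  have -> : cell W 1 w = false by apply/negP => /cell_lt; rewrite ltnn.
  move=> e; have e' : #|E| = #|[pred j : 'I_w.+1 | predT j && ~~ cell W 1 j]|.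
    by apply: eq_card.
  move: e e'; rewrite /= => e e'; rewrite e' -e.
  have H : forall x y, x + y = w -> y = 2 * k + 1 -> x + 1 = k.+1 by lia.
  exact: H hsum2 hsumc.
have hr : #|P| <= k.+1.
  rewrite -hE.
  pose f := fun p : 'I_w * 'I_w => (inord p.2.+1 : 'I_w.+1).
  rewrite -(card_in_imset (f:=f) (D:=P)).
    apply: subset_leq_card; apply/subsetP => x /imsetP[p hp ->].
    rewrite inE /f inordK; last by rewrite ltnS ltn_ord.
    by have [] := (mpP _ _ _ _).1 hp.
  move=> p q hp hq e.
  have e' : (p.2 : nat) = q.2.
    have := congr1 val e; rewrite /f /= !inordK ?ltnS ?ltn_ord //; by case.
  have [p1 _ _ _ _] := (mpP _ _ _ _).1 hp.
  have [q1 _ _ _ _] := (mpP _ _ _ _).1 hq.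
  have [e1 _] := mp_uniq hp hq (j := p.2) (introT andP (conj p1 (leqnn _)))
     ltac:(rewrite e'; apply/andP; split; [exact q1 | exact: leqnn]).
  exact: pairE.
have h0 := hI 0 isT; have h2 := hI 2 isT.
have hPk : #|P| = k.+1 by lia.
have h01 : #|cs 0 :&: cs 1| = k.+1 by lia.
have hSv : S = 2 * #|P| by lia.
have cover : forall j : 'I_w, cell W 0 j || cell W 1 j.
  have := cardsUI (cs 0) (cs 1); rewrite !hc // h01 => hU.
  have := cardsC (cs 0 :|: cs 1); rewrite card_ord => hC.
  have /cards0_eq hC0 : #|~: (cs 0 :|: cs 1)| = 0 by lia.
  move=> j; apply/negPn/negP => hj.
  have : j \in ~: (cs 0 :|: cs 1) by rewrite !inE.
  by rewrite hC0 inE.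
have gfull : forall p, P p -> g p = 2.
  move=> p0 hp0; apply/eqP; rewrite eqn_leq vbound //=.
  rewrite leqNgt; apply/negP => hlt.
  have := hS2; rewrite (bigD1 p0) //= => e.
  have hle := @sum_le_const _ [pred p | P p && (p != p0)] g 2
     (fun p hp => vbound hW (andP hp).1).
  have hcd := cardD1 p0 P; have hin : p0 \in P by []; rewrite hin in hcd.
  have hcd' : #|[predD1 P & p0]| = #|[pred p | P p && (p != p0)]|.
    by apply: eq_card => p; rewrite !inE andbC.
  have H : forall x y z c, S = x + y -> y <= z * 2 -> x < 2 -> c = 1 + z -> S = 2 * c -> False.
    move=> x y z c; lia.
  have hle' : \sum_(i in P | i != p0) g i <= #|[pred p | P p && (p != p0)]| * 2 := hle.
  rewrite hcd' in hcd; exact: (H _ _ _ _ e hle' hlt hcd hSv).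
pose L := fun p : 'I_w * 'I_w => ((p.2 : nat) - p.1).+1.
have hs : pillar_lengths W 1 = map L (enum P) by [].
have hsize : size (pillar_lengths W 1) = k.+1 by rewrite hs size_map -cardE.
have hnz : 0 \notin pillar_lengths W 1 by rewrite hs; apply/mapP => -[p _].
have hsumn : sumn (pillar_lengths W 1) = 2 * k + 1.
  rewrite hs sumnE big_map big_enum /=.
  rewrite (eq_bigr (fun p : 'I_w * 'I_w => \sum_(j < w | p.1 <= j <= p.2) 1)); last first.
    move=> p hp; have [p1 p2 _ _ _] := (mpP _ _ _ _).1 hp.
    rewrite sum_int /L; lia.
  rewrite -(part W 1 (fun=> 1)) sum1_card -hsumc (@sumb _ predT (fun j : 'I_w => cell W 1 j)).
  by apply: eq_card.
have hcnt : count (pred1 1) (pillar_lengths W 1) <= 2.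
  rewrite hs count_map count_enum.
  pose Q := [pred x | P x && preim L (pred1 1) x].
  have -> : #|[pred x | P x && preim L (pred1 1) x]| = #|[set x.1 | x in Q]|.
    rewrite card_in_imset // => p q /andP[hp _] /andP[hq _] e.
    have [p1 _ _ _ _] := (mpP _ _ _ _).1 hp.
    have [q1 _ _ _ _] := (mpP _ _ _ _).1 hq.
    have [_ e2] := mp_uniq hp hq (j := p.1) (introT andP (conj (leqnn _) p1))
       ltac:(rewrite e; apply/andP; split; [exact: leqnn | exact q1]).
    by apply: pairE => //; rewrite e.
  pose R := [pred j : 'I_w | ((j : nat) == 0) || ((j : nat) == w.-1)].
  apply: (@leq_trans #|R|).
    apply: subset_leq_card; apply/subsetP => x /imsetP[p /andP[hp hl] ->].
    rewrite inE /=.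
    have [p1 p2 p3 p4 p5] := (mpP _ _ _ _).1 hp.
    have e12 : (p.2 : nat) = p.1 by move: hl; rewrite /L /=; lia.
    apply/negPn/negP; rewrite negb_or => /andP[na nb].
    have hg := gfull p hp.
    have hgv : g p = v p.1.
      rewrite /g (big_pred1 p.1) // => j /=.
      by rewrite e12 andbC -eqn_leq.
    have c0 : cell W 0 p.1.
      by move: hg; rewrite hgv /v; case: (cell W 0 p.1); case: (cell W 2 p.1).
    have c1 : cell W 1 p.1 by apply: p3; rewrite leqnn /= e12 leqnn.
    have am : p.1.-1 < w by have := ltn_ord p.1; rewrite -subn1; lia.
    have ap : p.1.+1 < w. have := ltn_ord p.1; move: nb; rewrite -subn1 => /eqP. have H : forall a b : nat, a <> b - 1 -> a < b -> a.+1 < b by lia. exact: H.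
    have cm : cell W 0 p.1.-1.
      have := cover (Ordinal am); rewrite /=.
      by move: p4; rewrite (negbTE na) /= => /negbTE ->; rewrite orbF.
    have cp : cell W 0 p.1.+1.
      have := cover (Ordinal ap); rewrite /=.
      by move: p5; rewrite e12 => /negbTE ->; rewrite orbF.
    have := hW 0 p.1 c0; rewrite /degree cm cp c1.
    have -> : 0 < p.1 by rewrite lt0n.
    by [].
  have := @sumb _ predT (fun j : 'I_w => ((j : nat) == 0) || ((j : nat) == w.-1)).
  have -> : #|[pred j : 'I_w | predT j && (((j : nat) == 0) || ((j : nat) == w.-1))]| = #|R|.
    by apply: eq_card.
  move <-.
  apply: (@leq_trans (\sum_(j < w) (((j : nat) == 0 : nat) + ((j : nat) == w.-1)))).
    apply: leq_sum => j _; case: eqP; case: eqP => //=.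
  rewrite big_split /= !sum_eq_ord; case: (0 < w); case: (w.-1 < w) => //.
case: (final hk hnz hsize hsumn hcnt) => H; [left | right]; exact: H.
Qed.
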